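(* Let $f:\mathbb{R}^M\times\Theta\to\mathbb{R}^N$ be a network whose first layer is linear, $f(\mathbf{x};\boldsymbol{\theta})=g(\mathbf{W}\mathbf{x};\bar{\boldsymbol{\theta}})$ with $\boldsymbol{\theta}=(\mathbf{W},\bar{\boldsymbol{\theta}})$, $\mathbf{W}\in\mathbb{R}^{d\times M}$, $g$ differentiable in its first argument and twice differentiable in the parameters. Let $(\mathbf{x}_i,\mathbf{y}_i)_{i=1}^n$ be training data with all $\mathbf{x}_i\ne0$ and let $\boldsymbol{\theta}^*$ be an exact interpolation solution ($f(\mathbf{x}_i;\boldsymbol{\theta}^* )=\mathbf{y}_i$ for all $i$) with first-layer weight $\mathbf{W}$. Then $$\mathrm{MLS}_f=\frac1n\sum_{i=1}^n\|J_f(\mathbf{x}_i)\|_2\le \|\mathbf{W}\|_2\sqrt{\frac1n\sum_{i=1}^n\frac{1}{\|\mathbf{x}_i\|_2^2}}\;S(\boldsymbol{\theta}^* )^{1/2}.$$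
   Context: The loss is $L(\boldsymbol{\theta})=\frac1n\sum_{i=1}^n\frac12\|f(\mathbf{x}_i;\boldsymbol{\theta})-\mathbf{y}_i\|_2^2$ and the sharpness is $S(\boldsymbol{\theta})=\operatorname{Tr}(\nabla^2_{\boldsymbol{\theta}}L(\boldsymbol{\theta}))$. $J_f(\mathbf{x})\in\mathbb{R}^{N\times M}$ is the Jacobian of $\mathbf{x}\mapsto f(\mathbf{x};\boldsymbol{\theta}^* )$; the Maximum Local Sensitivity $\mathrm{MLS}_f$ is the sample mean of its largest singular value over the training inputs. $\|\cdot\|_2$ is the Euclidean norm for vectors and spectral norm for matrices. *)

(* Defs.v *)
From mathcomp Require Import all_boot all_order all_algebra.
From mathcomp Require Import all_classical all_reals all_analysis.
Import numFieldNormedType.Exports.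
Set Implicit Arguments. Unset Strict Implicit. Unset Printing Implicit Defensive.
Import Order.TTheory GRing.Theory Num.Theory.
Local Open Scope ring_scope.
Local Open Scope classical_set_scope.

Section Defs.
Variable R : realType.

Definition norm2 (k : nat) (v : 'cV[R]_k) : R :=
  Num.sqrt (\sum_(i < k) v i 0 ^+ 2).

Definition specnorm (m k : nat) (A : 'M[R]_(m, k)) : R :=
  sup [set norm2 (A *m v) | v in [set v : 'cV[R]_k | norm2 v <= 1]].

Definition jacobian (M N : nat) (F : 'cV[R]_M -> 'cV[R]_N) (x : 'cV[R]_M)
  : 'M[R]_(N, M) :=
  \matrix_(a < N, b < M) ('D_(delta_mx b 0 : 'cV[R]_M) F x) a 0.

Definition netf (M N d P : nat) (g : 'cV[R]_d -> 'cV[R]_P -> 'cV[R]_N)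
  (x : 'cV[R]_M) (th : 'M[R]_(d, M) * 'cV[R]_P) : 'cV[R]_N :=
  g (th.1 *m x) th.2.

Definition loss (M N d P n : nat) (g : 'cV[R]_d -> 'cV[R]_P -> 'cV[R]_N)
  (x : 'I_n -> 'cV[R]_M) (y : 'I_n -> 'cV[R]_N)
  (th : 'M[R]_(d, M) * 'cV[R]_P) : R :=
  (n%:R)^-1 * \sum_(i < n) (2%:R^-1 * norm2 (netf g (x i) th - y i) ^+ 2).

Definition hess_trace (d M P : nat) (L : 'M[R]_(d, M) * 'cV[R]_P -> R)
  (th : 'M[R]_(d, M) * 'cV[R]_P) : R :=
  \sum_(j < d) \sum_(k < M)
     (let e : 'M[R]_(d, M) * 'cV[R]_P := (delta_mx j k, 0) in 'D_e ('D_e L) th)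
  + \sum_(p < P)
     (let e : 'M[R]_(d, M) * 'cV[R]_P := (0, delta_mx p 0) in 'D_e ('D_e L) th).

Definition sharpness (M N d P n : nat) (g : 'cV[R]_d -> 'cV[R]_P -> 'cV[R]_N)
  (x : 'I_n -> 'cV[R]_M) (y : 'I_n -> 'cV[R]_N)
  (th : 'M[R]_(d, M) * 'cV[R]_P) : R :=
  hess_trace (loss g x y) th.

Definition MLS (M N d P n : nat) (g : 'cV[R]_d -> 'cV[R]_P -> 'cV[R]_N)
  (x : 'I_n -> 'cV[R]_M) (th : 'M[R]_(d, M) * 'cV[R]_P) : R :=
  (n%:R)^-1 * \sum_(i < n) specnorm (jacobian (fun z => netf g z th) (x i)).

End Defs.

(* Main.v *)
Require Import Defs.
From mathcomp Require Import all_boot all_order all_algebra.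
From mathcomp Require Import all_classical all_reals all_analysis.
From mathcomp Require Import ring lra.
Import numFieldNormedType.Exports.
Import Order.TTheory GRing.Theory Num.Theory.
Local Open Scope ring_scope.

Lemma CS (R : realFieldType) k (a b : 'I_k -> R) :
  (\sum_i a i * b i) ^+ 2 <= (\sum_i a i ^+ 2) * (\sum_i b i ^+ 2).
Proof.
have H : 0 <= \sum_i \sum_j (a i * b j - a j * b i) ^+ 2.
  by apply: sumr_ge0 => i _; apply: sumr_ge0 => j _; exact: sqr_ge0.
have E : \sum_i \sum_j (a i * b j - a j * b i) ^+ 2 =
   2 * ((\sum_i a i ^+ 2) * (\sum_i b i ^+ 2)) - 2 * (\sum_i a i * b i) ^+ 2.
  have -> : \sum_i \sum_j (a i * b j - a j * b i) ^+ 2 =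
     \sum_i \sum_j (a i ^+ 2 * b j ^+ 2) + \sum_i \sum_j (b i ^+ 2 * a j ^+ 2)
     - 2 * \sum_i \sum_j ((a i * b i) * (a j * b j)).
    rewrite mulr_sumr -big_split -sumrB; apply: eq_bigr => i _.
    rewrite mulr_sumr -big_split -sumrB; apply: eq_bigr => j _.
    rewrite /=.
    ring.
  have P : forall u v : 'I_k -> R, \sum_i \sum_j u i * v j = (\sum_i u i) * (\sum_j v j).
    by move=> u v; rewrite mulr_suml; apply: eq_bigr => i _; rewrite mulr_sumr.
  rewrite !(P (fun i => _)) /=.
  ring.
have : 0 <= 2 * ((\sum_i a i ^+ 2) * (\sum_i b i ^+ 2) - (\sum_i a i * b i) ^+ 2).
  by rewrite mulrBr -E.
by rewrite pmulr_rge0 // subr_ge0.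
Qed.

Lemma final_ineq (R : rcfType) n (s fr nx : 'I_n -> R) (sig S : R) :
  (0 < n)%N -> (forall i, 0 < nx i) -> 0 <= sig ->
  (forall i, s i <= fr i * sig) -> (forall i, 0 <= fr i) ->
  n%:R^-1 * \sum_i (nx i ^+ 2 * fr i ^+ 2) <= S ->
  n%:R^-1 * \sum_i s i <=
  sig * Num.sqrt (n%:R^-1 * \sum_i (nx i ^+ 2)^-1) * Num.sqrt S.
Proof.
move=> n0 nxp sg0 hs fr0 hS.
have ni0 : 0 <= n%:R^-1 :> R by rewrite invr_ge0 ler0n.
have A0 : 0 <= \sum_i (nx i ^+ 2)^-1.
  by apply: sumr_ge0 => i _; rewrite invr_ge0 sqr_ge0.
have B0 : 0 <= \sum_i (nx i ^+ 2 * fr i ^+ 2).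
  by apply: sumr_ge0 => i _; apply: mulr_ge0; exact: sqr_ge0.
have S0 : 0 <= S by apply: le_trans hS; exact: mulr_ge0.
have st1 : n%:R^-1 * \sum_i s i <= sig * (n%:R^-1 * \sum_i fr i).
  rewrite mulrCA; apply: ler_wpM2l => //; rewrite mulr_sumr; apply: ler_sum => i _.
  by rewrite mulrC.
have fr0s : 0 <= \sum_i fr i by apply: sumr_ge0.
have st2 : \sum_i fr i <= Num.sqrt (\sum_i (nx i ^+ 2)^-1) * Num.sqrt (\sum_i (nx i ^+ 2 * fr i ^+ 2)).
  rewrite -sqrtrM // -[leLHS]ger0_norm // -sqrtr_sqr ler_sqrt; last exact: mulr_ge0.
  have -> : \sum_i fr i = \sum_i (nx i)^-1 * (nx i * fr i).
    apply: eq_bigr => i _; rewrite mulrA mulVf ?mul1r //; exact: lt0r_neq0.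
  have -> : \sum_i (nx i ^+ 2)^-1 = \sum_i ((nx i)^-1) ^+ 2.
    by apply: eq_bigr => i _; rewrite exprVn.
  have -> : \sum_i (nx i ^+ 2 * fr i ^+ 2) = \sum_i (nx i * fr i) ^+ 2.
    by apply: eq_bigr => i _; rewrite exprMn.
  exact: CS.
have st3 : n%:R^-1 * \sum_i fr i <=
    Num.sqrt (n%:R^-1 * \sum_i (nx i ^+ 2)^-1) * Num.sqrt (n%:R^-1 * \sum_i (nx i ^+ 2 * fr i ^+ 2)).
  rewrite !sqrtrM // mulrACA -expr2 sqr_sqrtr //; exact: ler_wpM2l.
rewrite -mulrA; apply: (le_trans st1); apply: ler_wpM2l => //.
apply: (le_trans st3); apply: ler_wpM2l; first exact: sqrtr_ge0.
by rewrite ler_sqrt.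
Qed.

Section Norms.
Set Implicit Arguments. Unset Strict Implicit.
Variable R : realType.

Definition frob (m k : nat) (A : 'M[R]_(m, k)) : R :=
  Num.sqrt (\sum_a \sum_j A a j ^+ 2).
Arguments frob {m k}.

Lemma norm2_ge0 k (v : 'cV[R]_k) : 0 <= norm2 v.
Proof. exact: sqrtr_ge0. Qed.

Lemma norm2_sq k (v : 'cV[R]_k) : norm2 v ^+ 2 = \sum_i v i 0 ^+ 2.
Proof. by rewrite sqr_sqrtr //; apply: sumr_ge0 => i _; exact: sqr_ge0. Qed.

Lemma frob_ge0 m k (A : 'M[R]_(m, k)) : 0 <= frob A.
Proof. exact: sqrtr_ge0. Qed.

Lemma frob_sq m k (A : 'M[R]_(m, k)) : frob A ^+ 2 = \sum_a \sum_j A a j ^+ 2.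
Proof.
by rewrite sqr_sqrtr //; apply: sumr_ge0 => i _; apply: sumr_ge0 => j _; exact: sqr_ge0.
Qed.

Lemma norm2_mul m k (A : 'M[R]_(m, k)) v : norm2 (A *m v) <= frob A * norm2 v.
Proof.
rewrite /norm2 /frob -sqrtrM; last by apply: sumr_ge0 => i _; apply: sumr_ge0 => j _; exact: sqr_ge0.
rewrite ler_sqrt; last first.
  apply: mulr_ge0; (apply: sumr_ge0 => i _); last exact: sqr_ge0.
  by apply: sumr_ge0 => j _; exact: sqr_ge0.
rewrite mulr_suml; apply: ler_sum => a _.
rewrite mxE; exact: CS.
Qed.

Lemma norm2_0 k : norm2 (0 : 'cV[R]_k) = 0.
Proof. by rewrite /norm2 big1 ?sqrtr0 // => i _; rewrite mxE expr0n. Qed.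

Local Open Scope classical_set_scope.

Lemma specnorm_ub m k (A : 'M[R]_(m, k)) v : norm2 v <= 1 -> norm2 (A *m v) <= specnorm A.
Proof.
move=> hv; apply: sup_upper_bound; last by exists v.
split; first by exists (norm2 (A *m 0)), 0 => //=; rewrite norm2_0 ler01.
exists (frob A) => r [w hw <-].
apply: (le_trans (norm2_mul A w)).
by rewrite -[leRHS]mulr1 ler_wpM2l // frob_ge0.
Qed.

Lemma specnorm_ge0 m k (A : 'M[R]_(m, k)) : 0 <= specnorm A.
Proof.
apply: le_trans (specnorm_ub A (v := 0) _); first exact: norm2_ge0.
by rewrite norm2_0 ler01.
Qed.

Lemma specnorm_mul m k l (B : 'M[R]_(m, k)) (W : 'M[R]_(k, l)) :
  specnorm (B *m W) <= frob B * specnorm W.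
Proof.
apply: ge_sup; first by exists (norm2 (B *m W *m 0)), 0 => //=; rewrite norm2_0 ler01.
move=> r [w hw <-]; rewrite -mulmxA.
apply: (le_trans (norm2_mul B _)); apply: ler_wpM2l; first exact: frob_ge0.
exact: specnorm_ub.
Qed.

End Norms.

Section Der.
Set Implicit Arguments. Unset Strict Implicit.
Variable R : realType.
Variable V : normedModType R.

Lemma dsum n (h : 'I_n -> V -> R) x v : (forall i, derivable (h i) x v) ->
  derivable (fun t => \sum_i h i t) x v /\
  'D_v (fun t => \sum_i h i t) x = \sum_i 'D_v (h i) x.
Proof.
move=> H; have -> : (fun t => \sum_i h i t) = \sum_i h i by rewrite fct_sumE.
split; [exact: derivable_sum | exact: derive_sum].
Qed.

Lemma dmul (f g : V -> R) x v : derivable f x v -> derivable g x v ->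
  derivable (fun t => f t * g t) x v /\
  'D_v (fun t => f t * g t) x = f x * 'D_v g x + g x * 'D_v f x.
Proof.
move=> df dg; have -> : (fun t => f t * g t) = f * g by [].
split; [exact: derivableM | exact: deriveM].
Qed.

Lemma dscal c (f : V -> R) x v : derivable f x v ->
  derivable (fun t => c * f t) x v /\
  'D_v (fun t => c * f t) x = c * 'D_v f x.
Proof.
move=> df; have [h1 h2] := dmul (derivable_cst c x v) df.
split; first exact: h1.
by rewrite h2 derive_cst mulr0 addr0.
Qed.

Lemma dsubc (f : V -> R) c x v : derivable f x v ->
  derivable (fun t => f t - c) x v /\
  'D_v (fun t => f t - c) x = 'D_v f x.
Proof.
move=> df; have -> : (fun t => f t - c) = f - cst c by [].
split; first by apply: derivableB => //; exact: derivable_cst.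
by rewrite deriveB ?derive_cst ?subr0 //; exact: derivable_cst.
Qed.

Lemma dcoord N (F : V -> 'cV[R]_N) th e a : derivable F th e ->
  derivable (fun t => F t a 0) th e /\
  'D_e (fun t => F t a 0) th = ('D_e F th) a 0.
Proof.
move=> dF; split; first exact: ((derivable_mxP _ _ _).1 dF a 0).
by rewrite (derive_mx dF) mxE.
Qed.


Lemma norm2_sq' k (v : 'cV[R]_k) : norm2 v ^+ 2 = \sum_i v i 0 ^+ 2.
Proof. by rewrite sqr_sqrtr //; apply: sumr_ge0 => i _; exact: sqr_ge0. Qed.

Lemma hess_dir n N (F : 'I_n -> V -> 'cV[R]_N) (y : 'I_n -> 'cV[R]_N) (e th0 : V) :
  (forall i th, differentiable (F i) th) ->
  (forall i, differentiable ('D_e (F i)) th0) ->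
  (forall i, F i th0 = y i) ->
  'D_e ('D_e (fun th => n%:R^-1 * \sum_(i < n) (2%:R^-1 * norm2 (F i th - y i) ^+ 2))) th0
  = n%:R^-1 * \sum_(i < n) \sum_(a < N) (('D_e (F i) th0) a 0) ^+ 2.
Proof.
move=> HF HD Hy.
pose phi i (a : 'I_N) th := F i th a 0 - y i a 0.
have Lq : (fun th => n%:R^-1 * \sum_(i < n) (2%:R^-1 * norm2 (F i th - y i) ^+ 2))
   = fun th => n%:R^-1 * \sum_(i < n) (2%:R^-1 * \sum_(a < N) (phi i a th * phi i a th)).
  apply: funext => th; congr (_ * _); apply: eq_bigr => i _; congr (_ * _).
  by rewrite norm2_sq'; apply: eq_bigr => a _; rewrite !mxE expr2.
have dphi : forall i a th, derivable (phi i a) th e /\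
    'D_e (phi i a) th = ('D_e (F i) th) a 0.
  move=> i a th; have [d1 e1] := dcoord a (diff_derivable (v:=e) (HF i th)).
  have [d2 e2] := dsubc (y i a 0) d1.
  by split; [exact: d2 | rewrite /phi e2 e1].
have D1 : 'D_e (fun th => n%:R^-1 * \sum_(i < n) (2%:R^-1 * \sum_(a < N) (phi i a th * phi i a th)))
   = fun th => n%:R^-1 * \sum_(i < n) \sum_(a < N) (phi i a th * ('D_e (F i) th) a 0).
  apply: funext => th.
  have h3 : forall i a, derivable (fun t => phi i a t * phi i a t) th e /\
      'D_e (fun t => phi i a t * phi i a t) th = 2%:R * (phi i a th * ('D_e (F i) th) a 0).
    move=> i a; have [d1 e1] := dphi i a th; have [d2 e2] := dmul d1 d1.
    by split; [exact: d2 | rewrite e2 e1; ring].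
  have h4 : forall i, derivable (fun t => 2%:R^-1 * \sum_(a < N) (phi i a t * phi i a t)) th e /\
      'D_e (fun t => 2%:R^-1 * \sum_(a < N) (phi i a t * phi i a t)) th =
      \sum_(a < N) (phi i a th * ('D_e (F i) th) a 0).
    move=> i; have [d1 e1] := dsum (fun a => (h3 i a).1).
    have [d2 e2] := dscal (2%:R^-1) d1.
    split; first exact: d2.
    rewrite e2 e1 mulr_sumr; apply: eq_bigr => a _; rewrite (h3 i a).2 mulrA mulVf ?mul1r //.
  have [d1 e1] := dsum (fun i => (h4 i).1).
  have [d2 e2] := dscal (n%:R^-1) d1.
  rewrite e2 e1; congr (_ * _); apply: eq_bigr => i _; exact: (h4 i).2.
rewrite Lq D1.
have h5 : forall i a, derivable (fun t => phi i a t * ('D_e (F i) t) a 0) th0 e /\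
   'D_e (fun t => phi i a t * ('D_e (F i) t) a 0) th0 = (('D_e (F i) th0) a 0) ^+ 2.
  move=> i a; have [d1 e1] := dphi i a th0.
  have [d2 e2] := dcoord a (diff_derivable (v:=e) (HD i)).
  have [d3 e3] := dmul d1 d2.
  split; first exact: d3.
  by rewrite e3 e2 e1 /phi Hy subrr mul0r add0r expr2.
have [d1 e1] := dsum (fun i => (dsum (fun a => (h5 i a).1)).1).
have [d2 e2] := dscal (n%:R^-1) d1.
rewrite e2 e1; congr (_ * _); apply: eq_bigr => i _.
by rewrite (dsum (fun a => (h5 i a).1)).2; apply: eq_bigr => a _; exact: (h5 i a).2.
Qed.

End Der.

Section Net.
Set Implicit Arguments. Unset Strict Implicit.
Variable R : realType.
Local Open Scope classical_set_scope.

Lemma Dlin d M N (G : 'cV[R]_d -> 'cV[R]_N) (W : 'M[R]_(d, M)) x v :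
  'D_v (fun z => G (W *m z)) x = 'D_(W *m v) G (W *m x).
Proof.
unfold derive; apply: (congr1 (fun f => lim (f @ 0^'))); apply: funext => h /=.
by rewrite mulmxDr scalemxAr.
Qed.

Lemma Dpar d M N P (g : 'cV[R]_d -> 'cV[R]_P -> 'cV[R]_N) xi (W E : 'M[R]_(d, M)) thbar :
  'D_((E, 0) : 'M[R]_(d, M) * 'cV[R]_P) (netf g xi) (W, thbar)
  = 'D_(E *m xi) (fun z => g z thbar) (W *m xi).
Proof.
unfold derive; apply: (congr1 (fun f => lim (f @ 0^'))); apply: funext => h /=.
by rewrite /netf /= scaler0 add0r mulmxDl scalemxAl.
Qed.

End Net.

Lemma norm2_gt0 (R : realType) k (v : 'cV[R]_k) : v != 0 -> 0 < norm2 v.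
Proof.
move=> vnz; rewrite lt_neqAle norm2_ge0 andbT eq_sym; apply: contra vnz => /eqP h.
have hs : \sum_i v i 0 ^+ 2 = 0.
  by rewrite -norm2_sq h expr0n.
apply/eqP/matrixP => i j; rewrite (ord1 j) mxE.
have : v i 0 ^+ 2 = 0.
  by apply: (psumr_eq0P _ hs) => // l _; exact: sqr_ge0.
by move/eqP; rewrite sqrf_eq0 => /eqP.
Qed.

Theorem proposition3 (R : realType) (M N d P n : nat)
  (g : 'cV[R]_d -> 'cV[R]_P -> 'cV[R]_N)
  (x : 'I_n -> 'cV[R]_M) (y : 'I_n -> 'cV[R]_N)
  (W : 'M[R]_(d, M)) (thbar : 'cV[R]_P) :
  (0 < n)%N ->
  (forall i, x i != 0) ->
  (* g differentiable in its first argument *)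
  (forall (t : 'cV[R]_P) (z : 'cV[R]_d), differentiable (fun z' => g z' t) z) ->
  (* f(x_i; .) twice differentiable in the parameters theta = (W, thbar) *)
  (forall i (th : 'M[R]_(d, M) * 'cV[R]_P), differentiable (netf g (x i)) th) ->
  (forall i (v th : 'M[R]_(d, M) * 'cV[R]_P),
      differentiable ('D_v (netf g (x i))) th) ->
  (* theta* = (W, thbar) interpolates the data exactly *)
  (forall i, netf g (x i) (W, thbar) = y i) ->
  MLS g x (W, thbar) <=
    specnorm W
    * Num.sqrt ((n%:R)^-1 * \sum_(i < n) (norm2 (x i) ^+ 2)^-1)
    * Num.sqrt (sharpness g x y (W, thbar)).
Proof.
move=> n0 xnz dg dF dDF Hy.
pose G := fun z => g z thbar.
pose z i := W *m x i.
pose Jg i := Defs.jacobian G (z i).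
have dGE : forall i v, 'D_v G (z i) = 'd G (z i) v.
  by move=> i v; rewrite deriveE //; exact: dg.
have Wdelta : forall b, W *m delta_mx b 0 = \sum_j W j b *: (delta_mx j 0 : 'cV[R]_d).
  move=> b; rewrite -colE {1}(matrix_sum_delta (col b W)).
  by apply: eq_bigr => j _; rewrite big_ord1 mxE.
have JE : forall i, Defs.jacobian (fun z => netf g z (W, thbar)) (x i) = Jg i *m W.
  move=> i; apply/matrixP => a b; rewrite !mxE.
  have -> : (fun z => netf g z (W, thbar)) = (fun z => G (W *m z)) by [].
  rewrite Dlin dGE Wdelta linear_sum summxE; apply: eq_bigr => j _.
  by rewrite linearZ mxE /Jg /Defs.jacobian mxE dGE mulrC.
have dx : forall i j k, delta_mx j k *m x i = x i k 0 *: (delta_mx j 0 : 'cV[R]_d).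
  move=> i j k; apply/matrixP => r c; rewrite (ord1 c) !mxE (bigD1 k) //= !mxE eqxx andbT.
  rewrite big1 ?addr0; first by rewrite mulrC.
  by move=> l lk; rewrite !mxE (negbTE lk) andbF mul0r.
have PE : forall i j k a,
    ('D_((delta_mx j k, 0) : 'M[R]_(d, M) * 'cV[R]_P) (netf g (x i)) (W, thbar)) a 0
    = x i k 0 * Jg i a j.
  move=> i j k a; rewrite Dpar.
  have -> : (fun z => g z thbar) = G by [].
  by rewrite (dGE i) dx linearZ mxE /Jg /Defs.jacobian mxE dGE.
have HT : forall e, 'D_e ('D_e (loss g x y)) (W, thbar) =
    n%:R^-1 * \sum_i \sum_a (('D_e (netf g (x i)) (W, thbar)) a 0) ^+ 2.
  move=> e; rewrite /loss; apply: hess_dir => //.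
have Sge : n%:R^-1 * \sum_i (norm2 (x i) ^+ 2 * frob (Jg i) ^+ 2)
    <= sharpness g x y (W, thbar).
  rewrite /sharpness /hess_trace.
  rewrite -[leLHS]addr0; apply: lerD; last first.
    apply: sumr_ge0 => p _; rewrite /= HT; apply: mulr_ge0; first by rewrite invr_ge0 ler0n.
    by apply: sumr_ge0 => i _; apply: sumr_ge0 => a _; exact: sqr_ge0.
  rewrite (eq_bigr (fun j => \sum_(k < M) n%:R^-1 * \sum_i \sum_a (x i k 0 * Jg i a j) ^+ 2)); last first.
    move=> j _; apply: eq_bigr => k _; rewrite /= HT; congr (_ * _).
    by apply: eq_bigr => i _; apply: eq_bigr => a _; rewrite PE.
  rewrite le_eqVlt; apply/orP; left; apply/eqP; apply/esym.
  transitivity (n%:R^-1 * \sum_(j < d) \sum_(k < M) \sum_i \sum_a (x i k 0 * Jg i a j) ^+ 2).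
    by rewrite mulr_sumr; apply: eq_bigr => j _; rewrite mulr_sumr.
  congr (_ * _).
  under eq_bigr => j _ do rewrite exchange_big.
  rewrite exchange_big /=; apply: eq_bigr => i _.
  rewrite norm2_sq frob_sq mulr_suml exchange_big /=; apply: eq_bigr => k _.
  rewrite mulr_sumr exchange_big /=; apply: eq_bigr => a _.
  by rewrite mulr_sumr; apply: eq_bigr => j _; rewrite exprMn.
rewrite /MLS; under eq_bigr => i _ do rewrite JE.
apply: (@final_ineq R n (fun i => specnorm (Jg i *m W)) (fun i => frob (Jg i))
  (fun i => norm2 (x i))) => //.
- by move=> i; exact: norm2_gt0.
- exact: specnorm_ge0.
- by move=> i; exact: specnorm_mul.
- by move=> i; exact: frob_ge0.
Qed.
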